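(* For every integer $k \geq 2$ there is an MSyDS $\mathcal{S}_k$ with $k$ layers, in which every local function is a threshold function and every master function is \texttt{OR}, with the following properties: (1) there is no MSyDS with fewer than $k$ layers, on the same node set, in which every local function is a symmetric Boolean function and every master function is \texttt{OR}, that is equivalent to $\mathcal{S}_k$; (2) there is an MSyDS with two layers, on the same node set, in which every local function is a threshold function and every master function is \texttt{AND}, that is equivalent to $\mathcal{S}_k$.
   Context: A multilayer synchronous dynamical system (MSyDS) $\mathcal{S}$ over $\mathbb{B}=\{0,1\}$ with $k\ge 1$ layers consists of: a finite node set $V$; undirected simple graphs $G_i=(V,E_i)$, $1\le i\le k$ (all layers share the node set $V$); for each layer $i$ and node $v$ a local function $f_{i,v}$ with output in $\mathbb{B}$ whose inputs are the states of the nodes in the closed neighborhood of $v$ in $G_i$ ($v$ and its neighbors in $G_i$); and for each node $v$ a master function $\psi_v:\mathbb{B}^k\to\mathbb{B}$. A configuration is a map $\mathcal{C}:V\to\mathbb{B}$; its successor is $\mathcal{C}'$ with $\mathcal{C}'(v)=\psi_v(f_{1,v}(\mathcal{C}),\dots,f_{k,v}(\mathcal{C}))$ for all $v$ (synchronous update), where $f_{i,v}(\mathcal{C})$ is $f_{i,v}$ evaluated on the states in $\mathcal{C}$ of the closed neighborhood of $v$ in $G_i$. The phase space is the directed graph on all configurations with an arc from each configuration to its successor. Two MSyDSs on the same node set are equivalent if their phase spaces are identical. For an integer $\tau\ge 0$, the $\tau$-threshold function equals 1 iff at least $\tau$ of its inputs equal 1 (a threshold exceeding the number of inputs gives the constant-0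 function); a threshold function is a $\tau$-threshold function for some $\tau\ge 0$. A Boolean function is symmetric if its value depends only on the number of 1's among its inputs. \texttt{OR} is 1 iff at least one input is 1; \texttt{AND} is 1 iff all inputs are 1. *)

(* Defs.v *)
From mathcomp Require Import all_boot.
Set Implicit Arguments. Unset Strict Implicit. Unset Printing Implicit Defensive.

Definition config (V : finType) := V -> bool.

Definition cnbhd (V : finType) (e : rel V) (v : V) : pred V :=
  fun u => (u == v) || e v u.

(* Layer i is an undirected simple graph (symmetric irreflexive relation);
   the local function of node v in layer i only depends on the states of the
   closed neighbourhood of v in layer i; master functions take k bits. *)
Record msyds (V : finType) (k : nat) := MSyDS {
  layer : 'I_k -> rel V;
  layer_sym : forall i, symmetric (layer i);
  layer_irr : forall i, irreflexive (layer i);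
  local : 'I_k -> V -> config V -> bool;
  local_dep : forall i v (C C' : config V),
      (forall u, cnbhd (layer i) v u -> C u = C' u) -> local i v C = local i v C';
  master : V -> {ffun 'I_k -> bool} -> bool
}.

Definition ones_in (V : finType) (e : rel V) (v : V) (C : config V) : nat :=
  #|[pred u | cnbhd e v u && C u]|.

Definition succ (V : finType) (k : nat) (S : msyds V k) (C : config V) : config V :=
  fun v => master S v [ffun i => local S i v C].

(* equivalence: identical phase spaces, i.e. identical successor maps *)
Definition equivalent (V : finType) (k1 k2 : nat) (S1 : msyds V k1) (S2 : msyds V k2) :=
  forall (C : config V) (v : V), succ S1 C v = succ S2 C v.

Definition all_threshold (V : finType) (k : nat) (S : msyds V k) :=
  forall i v, exists tau : nat,
    forall C, local S i v C = (tau <= ones_in (layer S i) v C).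

Definition all_symmetric (V : finType) (k : nat) (S : msyds V k) :=
  forall i v, exists g : nat -> bool,
    forall C, local S i v C = g (ones_in (layer S i) v C).

Definition all_master_OR (V : finType) (k : nat) (S : msyds V k) :=
  forall v (b : {ffun 'I_k -> bool}), master S v b = [exists i, b i].

Definition all_master_AND (V : finType) (k : nat) (S : msyds V k) :=
  forall v (b : {ffun 'I_k -> bool}), master S v b = [forall i, b i].

(* Main.v *)
Require Import Defs.
From mathcomp Require Import all_boot.
Set Implicit Arguments. Unset Strict Implicit. Unset Printing Implicit Defensive.

Lemma ones_in_dep (V : finType) (e : rel V) v (C C' : config V) :
  (forall u, cnbhd e v u -> C u = C' u) -> ones_in e v C = ones_in e v C'.
Proof.
move=> H; apply: eq_card => u; rewrite !inE.
by case Hc: (cnbhd e v u) => //=; rewrite H.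
Qed.

Lemma two_leP (T : finType) (P : pred T) :
  reflect (exists a b, [/\ a != b, P a & P b]) (2 <= #|P|).
Proof.
apply: (iffP idP).
  move=> H; have /card_gt0P [a Pa] : 0 < #|P| by apply: leq_trans H.
  move: H; rewrite (cardD1 a) Pa add1n ltnS => /card_gt0P [b].
  rewrite !inE => /andP [ba Pb]; exists a, b; split => //.
  by rewrite eq_sym.
move=> [a [b [ab Pa Pb]]].
have <- : #|pred2 a b| = 2 by rewrite card2 ab.
apply: subset_leq_card; apply/subsetP => u; rewrite !inE.
by case/orP => /eqP ->.
Qed.

Section Sys.
Variable k : nat.
Definition VT : finType := option 'I_k.

Definition layerK (i : 'I_k) : rel VT := fun x y =>
  ((x == None) && (y == Some i)) || ((y == None) && (x == Some i)).
Lemma layerK_sym i : symmetric (layerK i).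
Proof. by move=> x y; rewrite /layerK orbC. Qed.
Lemma layerK_irr i : irreflexive (layerK i).
Proof. by case=> [x|] //=; rewrite /layerK /= orbF. Qed.

Definition tauK (w : VT) : nat := if w is None then 2 else 0.
Definition localK (i : 'I_k) (w : VT) (C : config VT) : bool :=
  tauK w <= ones_in (layerK i) w C.
Lemma localK_dep i v (C C' : config VT) :
  (forall u, cnbhd (layerK i) v u -> C u = C' u) -> localK i v C = localK i v C'.
Proof. by move=> H; rewrite /localK (ones_in_dep H). Qed.

Definition SK : msyds VT k :=
  @MSyDS VT k layerK layerK_sym layerK_irr localK localK_dep
    (fun _ b => [exists i, b i]).

Lemma SK_None C : succ SK C None = C None && [exists i, C (Some i)].
Proof.
rewrite /succ /=.
apply/existsP/andP.
  move=> [i]; rewrite ffunE /localK /= /ones_in => /two_leP [a [b [ab]]].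
  rewrite !inE /cnbhd /layerK /=.
  case: a ab => [a|]; case: b => [b|] //=; rewrite ?orbF ?andbT.
  - move=> ab /andP [/eqP [ea] _] /andP [/eqP [eb] _].
    by rewrite ea eb eqxx in ab.
  - by move=> _ /andP [/eqP [->]] Ca Cn; split => //; apply/existsP; exists i.
  - by move=> _ Cn /andP [/eqP [->]] Ca; split => //; apply/existsP; exists i.
move=> [Cn /existsP [i Ci]]; exists i; rewrite ffunE /localK /=.
apply/two_leP; exists None, (Some i); split => //; rewrite !inE /cnbhd /layerK /=.
by rewrite ?eqxx ?andbT ?Ci ?orbT ?Cn.
Qed.

Lemma SK_Some C x : succ SK C (Some x) = true.
Proof. by rewrite /succ /=; apply/existsP; exists x; rewrite ffunE. Qed.
End Sys.

Section Sys2.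
Variable k : nat.
Definition layer2 (i : 'I_2) : rel (VT k) := fun x y =>
  (val i != 0) && (((x == None) && (y != None)) || ((y == None) && (x != None))).
Lemma layer2_sym i : symmetric (layer2 i).
Proof. by move=> x y; rewrite /layer2 [in X in _ && X]orbC. Qed.
Lemma layer2_irr i : irreflexive (layer2 i).
Proof. by case=> [x|] //=; rewrite /layer2 /= ?andbF ?andbT ?orbF. Qed.

Definition tau2 (i : 'I_2) (w : VT k) : nat :=
  if w is None then (if val i == 0 then 1 else 2) else 0.
Definition local2 (i : 'I_2) (w : VT k) (C : config (VT k)) : bool :=
  tau2 i w <= ones_in (layer2 i) w C.
Lemma local2_dep i v (C C' : config (VT k)) :
  (forall u, cnbhd (layer2 i) v u -> C u = C' u) -> local2 i v C = local2 i v C'.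
Proof. by move=> H; rewrite /local2 (ones_in_dep H). Qed.

Definition S2 : msyds (VT k) 2 :=
  @MSyDS (VT k) 2 layer2 layer2_sym layer2_irr local2 local2_dep
    (fun _ b => [forall i, b i]).

Lemma S2_None C : succ S2 C None = C None && [exists i, C (Some i)].
Proof.
rewrite /succ /=.
have -> : [forall i, [ffun i => local2 i None C] i] =
   local2 ord0 None C && local2 (Ordinal (isT : 1 < 2)) None C.
  apply/forallP/andP.
    by move=> H; split; have := H ord0; have := H (Ordinal (isT : 1 < 2)); rewrite !ffunE.
  move=> [H0 H1] [m Hm]; rewrite ffunE; case: m Hm => [|[|m]] Hm //.
have -> : local2 ord0 None C = C None.
  rewrite /local2 /= /ones_in.
  case Cn: (C None).
    apply/card_gt0P; exists None; by rewrite !inE /cnbhd eqxx Cn.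
  apply/negbTE; rewrite -leqNgt leqn0; apply/eqP; apply: eq_card0 => u.
  rewrite !inE /cnbhd /layer2 /=; case: u => [u|] //=; by rewrite Cn.
case Cn: (C None) => //=.
rewrite /local2 /= /ones_in; apply/two_leP/existsP.
  move=> [a [b [ab]]]; rewrite !inE /cnbhd /layer2 /=.
  case: a ab => [a|]; case: b => [b|] //= _.
  - by move=> Ca _; exists a.
  - by move=> Ca _; exists a.
  - by move=> _ Cb; exists b.
move=> [i Ci]; exists None, (Some i); split => //; by rewrite !inE /cnbhd /layer2 /= ?Cn ?Ci.
Qed.

Lemma S2_Some C x : succ S2 C (Some x) = true.
Proof. by rewrite /succ /=; apply/forallP => i; rewrite ffunE. Qed.
End Sys2.

Theorem theorem6p2 :
  forall k : nat, 2 <= k ->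
  exists (V : finType) (S : msyds V k),
    all_threshold S /\ all_master_OR S /\
    (forall (k' : nat) (S' : msyds V k'), 1 <= k' -> k' < k ->
        all_symmetric S' -> all_master_OR S' -> ~ equivalent S S') /\
    (exists S2 : msyds V 2,
        all_threshold S2 /\ all_master_AND S2 /\ equivalent S S2).
Proof.
move=> k hk; exists (VT k), (SK k).
split; first by move=> i v; exists (tauK v).
split; first by [].
split; last first.
  exists (S2 k); split; first by move=> i v; exists (tau2 i v).
  split; first by [].
  by move=> C [x|]; rewrite ?SK_Some ?S2_Some ?SK_None ?S2_None.
move=> k' S' hk' hk'k hsym hor heq.
have hs j (C C' : config (VT k)) : ones_in (layer S' j) None C = ones_in (layer S' j) None C' ->
    local S' j None C = local S' j None C'.
  by have [g Hg] := hsym j None; rewrite !Hg => ->.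
have hS' C : succ (SK k) C None = [exists j, local S' j None C].
  rewrite heq /succ hor; apply/existsP/existsP => -[j Hj]; exists j; move: Hj; by rewrite ffunE.
pose C1 : config (VT k) := fun u => u == None.
have h1 j : local S' j None C1 = false.
  apply/negP => Hj; have := hS' C1; rewrite SK_None /C1 /=.
  have -> : [exists i : 'I_k, (Some i : VT k) == None] = false by case: existsP => // -[i].
  by move=> /esym /existsP; apply; exists j.
pose C2 i : config (VT k) := fun u => (u == None) || (u == Some i).
pose P i j := layer S' j None (Some i) && local S' j None (C2 i).
have hP i : exists j, P i j.
  have := hS' (C2 i); rewrite SK_None /C2 /=.
  have -> : [exists i0 : 'I_k, (Some i0 : VT k) == Some i] by apply/existsP; exists i.
  move=> /esym /existsP [j Hj]; exists j; rewrite /P Hj andbT.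
  apply/negP => He; move: Hj; rewrite (hs j _ C1) ?h1 //.
  apply: eq_card => u; rewrite !inE /cnbhd /C2 /C1; case: u => [x|] //=.
  case: (eqVneq (Some x) (Some i)) => [->|]; last by rewrite andbF.
  by rewrite (negbTE (introN idP He)).
pose j0 : 'I_k' := Ordinal hk'.
pose phi i := odflt j0 [pick j | P i j].
have HP i : P i (phi i).
  rewrite /phi; case: pickP => [j Hj|H] //=.
  by have [j Hj] := hP i; rewrite H in Hj.
case/boolP: [exists i, exists l, (i != l) && (phi i == phi l)]; last first.
  move=> Hn; have : injective phi.
    move=> i l Hil; case: (eqVneq i l) => // Hne; exfalso; move/negP: Hn; apply.
    by apply/existsP; exists i; apply/existsP; exists l; rewrite Hne Hil eqxx.
  move/leq_card; rewrite !card_ord => H; by move: (leq_ltn_trans H hk'k); rewrite ltnn.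
move=> /existsP [i /existsP [l /andP [il /eqP Hil]]].
have /andP [Hei Hloc] := HP i.
have /andP [Hel _] := HP l.
rewrite -Hil in Hel.
set j := phi i in Hei Hloc Hel.
pose C3 : config (VT k) := fun u => (u == Some i) || (u == Some l).
have c2 : ones_in (layer S' j) None (C2 i) = 2.
  rewrite /ones_in -(card2 None (Some i)); apply: eq_card => u.
  rewrite !inE /cnbhd /C2; case: u => [x|] //=.
  case: (eqVneq (Some x) (Some i)) => [->|]; by rewrite ?Hei ?andbF.
have c3 : ones_in (layer S' j) None C3 = 2.
  have il' : Some i != Some l :> VT k by apply: contra il => /eqP [->].
  have <- : #|pred2 (Some i) (Some l)| = 2 by rewrite card2 il'.
  rewrite /ones_in; apply: eq_card => u.
  rewrite !inE /cnbhd /C3; case: u => [x|] //=.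
  case: (eqVneq (Some x) (Some i)) => [->|]; first by rewrite ?Hei.
  case: (eqVneq (Some x) (Some l)) => [->|]; by rewrite ?Hel ?andbF.
have := hS' C3; rewrite SK_None /C3 /=.
move=> /esym /existsP; apply; exists j.
by rewrite (hs j _ (C2 i)) // c2 c3.
Qed.
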